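(* Let $\Sigma^*$ be an $n\times n$ positive definite matrix with $\Omega^*=(\Sigma^* )^{-1}$ whose conditional independence structure is a tree $T^*$, let $\mathcal{L}$ be the set of leaves of $T^*$, let $D^*$ be a diagonal matrix with nonnegative entries satisfying $D^*_{aa}<1/\Omega^*_{aa}$ for all $a\in\mathcal{L}$, and let $\Sigma^o=\Sigma^*+D^*$. Then for every decomposition $\Sigma^o=\Sigma'+D'$ in which $\Sigma'$ is positive definite with conditional independence structure a tree $T'$, and $D'$ is diagonal with nonnegative entries satisfying $D'_{aa}<1/\Omega^*_{aa}$ for all $a\in\mathcal{L}$, we have $T'=T^*$.
   Context: For an $n\times n$ positive definite matrix $\Sigma$ with inverse $\Omega$, its conditional independence structure is the graph on $\{1,\dots,n\}$ with an edge $\{i,j\}$ ($i\neq j$) iff $\Omega_{ij}\neq 0$. *)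

(* Defs.v *)
From HB Require Import structures.
From mathcomp Require Import all_boot all_order all_algebra.
Set Implicit Arguments. Unset Strict Implicit. Unset Printing Implicit Defensive.
Import Order.TTheory GRing.Theory Num.Theory.
Local Open Scope ring_scope.

Definition posdef (R : realFieldType) (n : nat) (S : 'M[R]_n) : Prop :=
  S^T = S /\ forall x : 'cV[R]_n, x != 0 -> 0 < (x^T *m S *m x) 0 0.

(* Conditional independence structure of S: edge {i,j}, i != j,
   iff (S^-1)_{ij} != 0; stored as a set of ordered pairs (symmetric). *)
Definition ci_graph (R : realFieldType) (n : nat) (S : 'M[R]_n)
  : {set 'I_n * 'I_n} :=
  [set p | (p.1 != p.2) && (invmx S p.1 p.2 != 0)].

Definition adj (n : nat) (E : {set 'I_n * 'I_n}) : rel 'I_n :=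
  fun i j => (i, j) \in E.

Definition is_tree (n : nat) (E : {set 'I_n * 'I_n}) : Prop :=
  (forall i j : 'I_n, connect (adj E) i j) /\
  (forall s : seq 'I_n, uniq s -> (3 <= size s)%N -> ~~ cycle (adj E) s).

Definition is_leaf (n : nat) (E : {set 'I_n * 'I_n}) (a : 'I_n) : bool :=
  #|[set j | adj E a j]| == 1%N.

Definition nonneg_diag (R : realFieldType) (n : nat) (D : 'M[R]_n) : Prop :=
  is_diag_mx D /\ forall i, 0 <= D i i.

(* Main.v *)
Require Import Defs.
From mathcomp Require Import all_boot all_order all_algebra.
Import Order.TTheory GRing.Theory Num.Theory.
Local Open Scope ring_scope.
From mathcomp Require Import zify ring lra.

Set Implicit Arguments. Unset Strict Implicit. Unset Printing Implicit Defensive.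

Local Close Scope ring_scope.
Section Graph.
Variable T : finType.
Variable e : rel T.
Hypothesis esym : symmetric e.
Hypothesis eirr : irreflexive e.
Hypothesis acyc : forall s : seq T, uniq s -> (3 <= size s)%N -> ~~ cycle e s.
Hypothesis conn : forall i j, connect e i j.

Definition av k : rel T := fun u v => [&& e u v, u != k & v != k].

Lemma av_sym k : symmetric (av k).
Proof. by move=> u v; rewrite /av esym (andbC (u != k)). Qed.

Lemma av_csym k x y : connect (av k) x y = connect (av k) y x.
Proof. exact: (sym_connect_sym (@av_sym k)). Qed.

Lemma av_e k : subrel (av k) e.
Proof. by move=> u v /andP[]. Qed.

Lemma av_path_neq k x p : path (av k) x p -> forall y, y \in p -> y != k.
Proof.
elim: p x => [|z p IH] x //= /andP[/and3P[_ _ zk] hp] y.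
rewrite in_cons => /orP[/eqP->//|]; exact: (IH _ hp y).
Qed.

Lemma path_av k x p : path e x p -> x != k -> (forall y, y \in p -> y != k) ->
  path (av k) x p.
Proof.
elim: p x => [|z p IH] x //= /andP[exz hp] xk hy.
have zk : z != k by apply: hy; rewrite mem_head.
rewrite /av exz xk zk /=; apply: IH => // y yp; apply: hy.
by rewrite in_cons yp orbT.
Qed.

Lemma no_cyc k a b : e k a -> e k b -> a != b -> connect (av k) a b -> False.
Proof.
move=> eka ekb ab /connectP[p hp hb].
move: hb; case: (shortenP hp) => p' hp' up' _ {hp} hl.
symmetry in hl.
have ak : a != k by apply/eqP => ak; move: eka; rewrite ak eirr.
have p'k := av_path_neq hp'.
have p'n : p' != [::] by apply/eqP => p0; move: ab; rewrite -hl p0 /= eqxx.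
have := acyc (s := k :: a :: p').
rewrite /= -/(uniq (a :: p')) up' andbT.
have -> : k \notin a :: p'.
  rewrite in_cons negb_or eq_sym ak /=; apply/negP => /p'k; by rewrite eqxx.
case: p' p'n hp' up' p'k hl => // z p'' _ hp' _ _ hl.
move/(_ isT isT); rewrite /cycle rcons_cons /= eka /= rcons_path.
have := sub_path (@av_e k) hp'; rewrite /= => /andP[-> ->].
by move: hl => /= ->; rewrite esym ekb.
Qed.

Lemma upath (r : rel T) x y : connect r x y ->
  exists p, [/\ path r x p, uniq (x :: p) & last x p = y].
Proof.
move/connectP=> [p hp hb]; move: hb.
by case: (shortenP hp) => p' hp' up' _ hl; exists p'.
Qed.

Lemma e_neq x y : e x y -> x != y.
Proof. by apply: contraTneq => ->; rewrite eirr. Qed.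

Lemma nbr_exists k x : x != k -> exists m, e k m.
Proof.
move=> xk; have /connectP[p hp hl] := conn k x.
case: p hp hl => [|m p] /=; first by move=> _ hx; move: xk; rewrite hx eqxx.
by move=> /andP[ekm _] _; exists m.
Qed.

Lemma nosep_leaf k : (forall x y, x != k -> y != k -> connect (av k) x y) ->
  (exists x, x != k) -> exists m, forall j, e k j = (j == m).
Proof.
move=> ns [x xk]; have [m ekm] := nbr_exists xk.
exists m => j; apply/idP/eqP => [ekj|->//].
apply/eqP; apply: contraT => jm.
exfalso; apply: (no_cyc ekj ekm jm); apply: ns.
- by rewrite eq_sym e_neq.
- by rewrite eq_sym e_neq.
Qed.

Lemma leaf_sep k m z : (forall j, e k j -> j == m) -> connect (av m) k z -> z = k.
Proof.
move=> hk /connectP[p hp ->]; case: p hp => [|y p] //= /andP[/and3P[eky _ ym] _].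
by move: ym; rewrite (eqP (hk _ eky)) eqxx.
Qed.

Lemma leaf_nosep k m : (forall j, e k j -> j == m) ->
  forall x y, x != k -> y != k -> connect (av k) x y.
Proof.
move=> hk x y xk yk; have /connectP[p hp hl] := conn x y.
elim: {p}(size p).+1 {-2}p (ltnSn (size p)) x xk hp hl => // N IH [|z p] /=.
  by move=> _ x _ _ ->.
move=> hs x xk /andP[exz hp] hl.
case: (eqVneq z k) => [zk|zk].
  case: p hs hp hl => [|w p] /=; first by move=> _ _ zy; move: yk; rewrite zy zk eqxx.
  move=> hs /andP[ezw hp] hl.
  have xm : x == m by apply: hk; rewrite -zk esym.
  have wm : w == m by apply: hk; rewrite -zk.
  have xw : x = w by rewrite (eqP xm) (eqP wm).
  subst w; apply: (IH p) => //; lia.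
apply: (connect_trans (y := z)); first by apply: connect1; rewrite /av exz xk zk.
apply: (IH p) => //; lia.
Qed.

Lemma sep_path i u v p : path e i (u :: v :: p) -> uniq (i :: u :: v :: p) ->
  ~~ connect (av u) i (last v p).
Proof.
move=> /= /and3P[eiu euv hp] /and4P[hi hu hv hp'].
apply/negP => hc.
have hvp : connect (av u) v (last v p).
  apply/connectP; exists p => //; apply: path_av => //.
    by move: hu; rewrite !in_cons negb_or eq_sym => /andP[].
  move=> y yp; apply/eqP => yu; subst y; move: hu.
  by rewrite in_cons yp orbT.
have hiv : connect (av u) i v by apply: connect_trans hc _; rewrite av_csym.
apply: (no_cyc _ euv _ hiv); first by rewrite esym.
by move: hi; rewrite !in_cons !negb_or => /and3P[].
Qed.

Lemma nonadj_sep a b : a != b -> ~~ e a b ->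
  exists k, [/\ k != a, k != b & ~~ connect (av k) a b].
Proof.
move=> ab nab; have [p [hp up hl]] := upath (conn a b).
case: p hp up hl => [|u [|v p]] /=.
- by move=> _ _ hab; move: ab; rewrite hab eqxx.
- by move=> /andP[eau _] _ hu; move: nab; rewrite -hu eau.
move=> hp up hl; exists u; split.
- by move: up => /andP[]; rewrite !in_cons !negb_or eq_sym => /andP[].
- rewrite -hl; move: up => /= /and3P[_ hu _]; apply: contra hu => /eqP ->.
  by rewrite mem_last.
- by rewrite -hl; apply: sep_path.
Qed.

Lemma adj_nosep a b k : e a b -> k != a -> k != b -> connect (av k) a b.
Proof. by move=> eab ka kb; apply: connect1; rewrite /av eab !(eq_sym _ k) ka kb. Qed.

Lemma walk_first i j p x : path e x p -> x != j -> last x p = j ->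
  (forall y, y \in x :: p -> y != i) ->
  exists w, [/\ w != i, connect (av j) x w & e w j].
Proof.
elim: p x => [|y p IH] x /=; first by move=> _ xj xj'; move: xj; rewrite xj' eqxx.
move=> /andP[exy hp] xj hl hall.
case: (eqVneq y j) => [yj|yj].
  exists x; split => //; last by rewrite -yj.
  by apply: hall; rewrite mem_head.
have [w [wi hyw ewj]] : exists w, [/\ w != i, connect (av j) y w & e w j].
  apply: IH => // z zp; apply: hall; by rewrite in_cons zp orbT.
exists w; split => //; apply: connect_trans hyw.
by apply: connect1; rewrite /av exy xj yj.
Qed.

Lemma base_sep i j k : e i j -> k != i -> k != j ->
  ~~ connect (av i) k j || ~~ connect (av j) k i.
Proof.
move=> eij ki kj; rewrite -negb_and; apply/negP => /andP[h1 h2].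
move/connectP: h1 => [p hp hl].
have [w [wi hkw ewj]] : exists w, [/\ w != i, connect (av j) k w & e w j].
  apply: (walk_first (p := p)).
  - exact: (sub_path (@av_e i) hp).
  - exact: kj.
  - by rewrite hl.
  - move=> y; rewrite in_cons => /orP[/eqP->//|]; exact: av_path_neq hp y.
have hiw : connect (av j) i w by apply: connect_trans hkw; rewrite av_csym.
apply: (no_cyc _ _ _ hiw); rewrite ?(esym j) //; by rewrite eq_sym.
Qed.

End Graph.

Local Open Scope ring_scope.

Section Bil.
Variable R : realFieldType.
Variable n : nat.
Implicit Types u w : 'cV[R]_n.

Definition bil (M : 'M[R]_n) u w := (u^T *m M *m w) 0 0.
Definition dv (k : 'I_n) : 'cV[R]_n := delta_mx k 0.

Lemma bilDl M u1 u2 w : bil M (u1 + u2) w = bil M u1 w + bil M u2 w.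
Proof. by rewrite /bil raddfD /= !mulmxDl !mxE. Qed.
Lemma bilBl M u1 u2 w : bil M (u1 - u2) w = bil M u1 w - bil M u2 w.
Proof. by rewrite /bil raddfB /= !mulmxBl !mxE. Qed.
Lemma bilZl M a u w : bil M (a *: u) w = a * bil M u w.
Proof. by rewrite /bil linearZ /= -!scalemxAl !mxE. Qed.
Lemma bilDr M u w1 w2 : bil M u (w1 + w2) = bil M u w1 + bil M u w2.
Proof. by rewrite /bil !mulmxDr !mxE. Qed.
Lemma bilBr M u w1 w2 : bil M u (w1 - w2) = bil M u w1 - bil M u w2.
Proof. by rewrite /bil !mulmxBr !mxE. Qed.
Lemma bilZr M a u w : bil M u (a *: w) = a * bil M u w.
Proof. by rewrite /bil -!scalemxAr !mxE. Qed.
Lemma bil_sym M u w : M^T = M -> bil M u w = bil M w u.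
Proof.
move=> hM; rewrite /bil.
have -> : (u^T *m M *m w) 0 0 = ((u^T *m M *m w)^T) 0 0 by rewrite [RHS]mxE.
by rewrite !trmx_mul trmxK hM mulmxA.
Qed.
Lemma bil_dvr M u k : bil M u (dv k) = (u^T *m M) 0 k.
Proof. by rewrite /bil /dv -colE !mxE. Qed.
Lemma dvE k i : dv k i 0 = (i == k)%:R.
Proof. by rewrite /dv mxE andbT. Qed.
Lemma bil_dv M i j : bil M (dv i) (dv j) = M i j.
Proof. by rewrite bil_dvr /dv trmx_delta -rowE !mxE. Qed.
Lemma bil_vec M u w : bil M u w = \sum_i u i 0 * (M *m w) i 0.
Proof. by rewrite /bil -mulmxA mxE; apply: eq_bigr => i _; rewrite !mxE. Qed.
End Bil.
Arguments dv {R n} k.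
Lemma algA (R : comRingType) (ik uu iu uk kj mm uj mk ij : R) :
 ik * uu = iu * uk -> uk * kj * mm = uj * mk ^+ 2 -> ij * uu = iu * uj ->
 ik * kj * mm * uu = ij * mk ^+ 2 * uu.
Proof.
move=> h1 h2 h3.
have -> : ik*kj*mm*uu = (ik*uu)*(kj*mm) by ring. rewrite h1.
have -> : iu*uk*(kj*mm) = iu*(uk*kj*mm) by ring. rewrite h2.
have -> : iu*(uj*mk^+2) = (iu*uj)*mk^+2 by ring. rewrite -h3. ring.
Qed.
Lemma algB (R : comRingType) (ik uu iu ku kj mm uj mk ij : R) :
 kj * uu = ku * uj -> ik * ku * mm = iu * mk ^+ 2 -> ij * uu = iu * uj ->
 ik * kj * mm * uu = ij * mk ^+ 2 * uu.
Proof.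
move=> h1 h2 h3.
have -> : ik*kj*mm*uu = ik*mm*(kj*uu) by ring. rewrite h1.
have -> : ik*mm*(ku*uj) = (ik*ku*mm)*uj by ring. rewrite h2.
have -> : iu*mk^+2*uj = (iu*uj)*mk^+2 by ring. rewrite -h3. ring.
Qed.

Section Tree.
Variable R : realFieldType.
Variable n : nat.
Variable S : 'M[R]_n.
Hypothesis hS : posdef S.

Local Notation Om := (invmx S).
Local Notation e := (adj (ci_graph S)).

Lemma e_def i j : e i j = (i != j) && (Om i j != 0).
Proof. by rewrite /adj /ci_graph inE. Qed.

Lemma SsymT : S^T = S. Proof. exact: hS.1. Qed.
Lemma Ssym i j : S i j = S j i.
Proof. by rewrite -{1}SsymT mxE. Qed.

Lemma pdS x : x != 0 -> 0 < bil S x x. Proof. exact: hS.2. Qed.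

Lemma unitS : S \in unitmx.
Proof.
rewrite unitmxE unitfE; apply/negP => /det0P[v v0 hv].
have := pdS (x := v^T); rewrite trmx_eq0 => /(_ v0).
by rewrite /bil trmxK hv mul0mx mxE ltxx.
Qed.

Lemma OmS : Om *m S = 1%:M. Proof. exact: mulVmx unitS. Qed.
Lemma SOm : S *m Om = 1%:M. Proof. exact: mulmxV unitS. Qed.
Lemma OmT : Om^T = Om. Proof. by rewrite trmx_inv SsymT. Qed.
Lemma Omsym i j : Om i j = Om j i.
Proof. by rewrite -{1}OmT mxE. Qed.

Lemma esymS : symmetric e.
Proof. by move=> i j; rewrite !e_def eq_sym Omsym. Qed.
Lemma eirrS : irreflexive e.
Proof. by move=> i; rewrite e_def eqxx. Qed.

Lemma pdOm x : x != 0 -> 0 < bil Om x x.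
Proof.
move=> x0; have hx : x = S *m (Om *m x) by rewrite mulmxA SOm mul1mx.
move: (Om *m x) hx => u hx; subst x.
have u0 : u != 0 by apply: contraNneq x0 => u0; rewrite u0 mulmx0.
rewrite /bil trmx_mul SsymT !mulmxA -(mulmxA _ Om S) OmS mulmx1.
exact: pdS.
Qed.

Lemma dv_neq0 k : dv k != 0 :> 'cV[R]_n.
Proof. by apply/eqP => /matrixP /(_ k 0); rewrite dvE eqxx !mxE; apply/eqP; rewrite oner_eq0. Qed.

Lemma Spos k : 0 < S k k.
Proof. by rewrite -(bil_dv S); apply: pdS; apply: dv_neq0. Qed.
Lemma Ompos k : 0 < Om k k.
Proof. by rewrite -(bil_dv Om); apply: pdOm; apply: dv_neq0. Qed.

Lemma zero_lem (z : 'cV[R]_n) : (forall x, z x 0 * (Om *m z) x 0 = 0) -> z = 0.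
Proof.
move=> hz; apply/eqP; apply: contraT => z0.
by have := pdOm z0; rewrite bil_vec big1 ?ltxx // => x _; apply: hz.
Qed.

Lemma OmSu (u : 'cV[R]_n) x : (Om *m (S *m u)) x 0 = u x 0.
Proof. by rewrite mulmxA OmS mul1mx. Qed.

Lemma restr (A : {set 'I_n}) (v : 'cV[R]_n) x :
  (forall y, y \notin A -> Om x y * v y 0 = 0) ->
  (Om *m \col_y (if y \in A then v y 0 else 0)) x 0 = (Om *m v) x 0.
Proof.
move=> h; rewrite !mxE; apply: eq_bigr => y _; rewrite mxE.
by case: ifP => // yA; rewrite h ?yA // mulr0.
Qed.

Lemma closure k i x y : x != k -> connect (av e k) i x -> y != k ->
  ~~ connect (av e k) i y -> Om x y = 0.
Proof.
move=> xk hx yk hy; apply/eqP; apply: contraNT hy => hxy.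
case: (eqVneq x y) => [<-//|xy].
apply: connect_trans hx _; apply: connect1.
by rewrite /av e_def xy hxy xk yk.
Qed.

Hypothesis ht : is_tree (ci_graph S).
Let conn : forall i j, connect e i j := ht.1.
Let acyc : forall s : seq 'I_n, uniq s -> (3 <= size s)%N -> ~~ cycle e s := ht.2.

Lemma Snz k : S k k != 0. Proof. by rewrite gt_eqF // Spos. Qed.

Lemma dvS (j : 'I_n) x : (S *m dv j) x 0 = S x j.
Proof. by rewrite /dv -colE !mxE. Qed.

Lemma F1 k i j : i != k -> j != k -> ~~ connect (av e k) i j ->
  S i j * S k k = S i k * S k j.
Proof.
move=> ik jk hij.
pose c := S k j / S k k.
pose w := S *m (dv j - c *: dv k).
have wE x : w x 0 = S x j - c * S x k.
  rewrite /w mulmxBr -scalemxAr; move: (dvS j x) (dvS k x).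
  by rewrite !mxE => -> ->.
have wk : w k 0 = 0 by rewrite wE /c divfK ?subrr // Snz.
pose A := [set x | (x != k) && connect (av e k) i x].
pose z := \col_y (if y \in A then w y 0 else 0).
have z0 : z = 0.
  apply: zero_lem => x; rewrite /z mxE; case: ifP => xA; last by rewrite mul0r.
  move: (xA); rewrite inE => /andP[xk cx].
  rewrite restr; last first.
    move=> y; rewrite inE negb_and negbK.
    case: (eqVneq y k) => [->|yk] /=; first by rewrite wk mulr0.
    by move=> ncy; rewrite (closure xk cx yk ncy) mul0r.
  rewrite OmSu !mxE (negbTE xk).
  have -> : (x == j) = false by apply/negP => /eqP xj; move: hij; rewrite -xj cx.
  by rewrite /= mulr0 subr0 mulr0.
have := congr1 (fun M : 'cV[R]_n => M i 0) z0; rewrite /z [in LHS]mxE [RHS]mxE.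
have -> : i \in A by rewrite inE ik connect0.
rewrite wE => /eqP; rewrite subr_eq0 => /eqP ->.
by rewrite /c mulrAC divfK ?Snz // mulrC.
Qed.

Lemma adjNZ a b : e a b -> S a b != 0.
Proof.
move=> eab; apply/negP => /eqP sab.
have ab : a != b by move: eab; rewrite e_def => /andP[].
pose v := S *m dv b.
have vE x : v x 0 = S x b by rewrite dvS.
pose A := [set x | (x != b) && connect (av e b) a x].
pose z := \col_y (if y \in A then v y 0 else 0).
have z0 : z = 0.
  apply: zero_lem => x; rewrite /z mxE; case: ifP => xA; last by rewrite mul0r.
  case: (eqVneq x a) => [->|xa]; first by rewrite vE sab mul0r.
  move: xA; rewrite inE => /andP[xb cx].
  rewrite restr; last first.
    move=> y; rewrite inE negb_and negbK.
    case: (eqVneq y b) => [->|yb] /=.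
      case: (eqVneq (Om x b) 0) => [->|hxb]; first by rewrite mul0r.
      exfalso; apply: (no_cyc esymS eirrS acyc (k := b) (a := a) (b := x)) => //.
      - by rewrite esymS.
      - by rewrite esymS e_def xb hxb.
      - by rewrite eq_sym.
    by move=> ncy; rewrite (closure xb cx yb ncy) mul0r.
  by rewrite /v OmSu dvE (negbTE xb) mulr0.
have : (Om *m v) a 0 = 0 by rewrite /v OmSu dvE (negbTE ab).
rewrite mxE (bigD1 b) //= big1 => [|y yb].
  rewrite vE addr0 => /eqP; rewrite mulf_eq0 (negbTE (Snz b)) orbF.
  by move: eab; rewrite e_def => /andP[_ /negbTE ->].
case: (boolP (y \in A)) => yA.
  have := congr1 (fun M : 'cV[R]_n => M y 0) z0; rewrite /z !mxE yA => ->.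
  by rewrite mulr0.
move: yA; rewrite inE negb_and negbK (negbTE yb) /= => ncy.
by rewrite (closure ab (connect0 _ _) yb ncy) mul0r.
Qed.

Lemma F2_aux N : forall p i, (size p < N)%N -> path e i p -> uniq (i :: p) ->
  p != [::] -> S i (last i p) != 0.
Proof.
elim: N => // N IH [|u [|v p]] i //= hs.
  by move=> /andP[eiu _] _ _; apply: adjNZ.
move=> /and3P[eiu euv hp] hu _.
have hsep := sep_path esymS eirrS acyc (p := p) (i := i) (u := u) (v := v).
have {hsep} hsep : ~~ connect (av e u) i (last v p).
  by apply: hsep => //=; rewrite euv hp eiu.
have iu : i != u by move: hu => /andP[]; rewrite in_cons negb_or => /andP[].
have ju : last v p != u.
  move: hu => /and3P[_ hu _]; apply: contraNneq hu => <-; exact: mem_last.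
have h := F1 iu ju hsep.
have h1 : S i u != 0 by apply: adjNZ.
have h2 : S u (last v p) != 0.
  have := IH (v :: p) u; rewrite /= => -> //; first by lia.
  by move: hu => /andP[].
apply/eqP => h0; move: h; rewrite h0 mul0r => /esym /eqP.
by rewrite mulf_eq0 (negbTE h1) (negbTE h2).
Qed.

Lemma F2 i j : i != j -> S i j != 0.
Proof.
move=> ij; have [p [hp up hl]] := upath (conn i j).
rewrite -hl; apply: (F2_aux (N := (size p).+1)) => //.
by apply: contraNneq ij => p0; rewrite -hl p0.
Qed.

Lemma Gb i j k : e i j -> i != k -> j != k ->
  exists m, m != k /\ S i k * S k j * S m m = S i j * S m k ^+ 2.
Proof.
move=> eij ik jk.
have ki : k != i by rewrite eq_sym.
have kj : k != j by rewrite eq_sym.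
have := base_sep esymS eirrS acyc eij ki kj => /orP[] h.
  have := F1 (i := k) (k := i) (j := j); rewrite eq_sym ik => /(_ isT).
  have ji : j != i by rewrite eq_sym; move: eij; rewrite e_def => /andP[].
  move=> /(_ ji h) hh; exists i; split => //.
  rewrite (Ssym k i) in hh; rewrite -mulrA hh; ring.
have := F1 (i := k) (k := j) (j := i); rewrite eq_sym jk => /(_ isT).
have ij : i != j by move: eij; rewrite e_def => /andP[].
move=> /(_ ij h) hh; exists j; split => //.
rewrite (Ssym k i) (Ssym j i) in hh; rewrite (Ssym j k) mulrAC hh; ring.
Qed.

Lemma G_aux k N : forall p i, (size p < N)%N -> path (av e k) i p ->
  uniq (i :: p) -> i != k -> p != [::] ->
  exists m, m != k /\ S i k * S k (last i p) * S m m = S i (last i p) * S m k ^+ 2.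
Proof.
elim: N => // N IH [|u [|v p]] i //= hs.
  by move=> /andP[/and3P[eiu _ uk] _] _ ik _; apply: Gb.
move=> hpath hu ik _.
have hpe : path e i [:: u, v & p] :=
  sub_path (@av_e _ e k) (hpath : path (av e k) i [:: u, v & p]).
move: hpath => /andP[/and3P[eiu _ uk] hp].
have hsep := sep_path esymS eirrS acyc hpe hu.
have iu : i != u by move: hu => /andP[]; rewrite in_cons negb_or => /andP[].
have ju : last v p != u.
  move: hu => /and3P[_ hu _]; apply: contraNneq hu => <-; exact: mem_last.
have h3 := F1 iu ju hsep.
have ku : k != u by rewrite eq_sym.
have : ~~ connect (av e u) i k || ~~ connect (av e u) k (last v p).
  rewrite -negb_and; apply: contra hsep => /andP[h1 h2]; exact: connect_trans h1 h2.
move=> /orP[] hc.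
  have h1 := F1 iu ku hc.
  have [m [mk hm]] : exists m : 'I_n, m != k /\
      S u k * S k (last v p) * S m m = S u (last v p) * S m k ^+ 2.
    by apply: (IH (v :: p) u) => //=; move: hu => /andP[].
  exists m; split => //; apply: (mulIf (Snz u)); exact: algA h1 hm h3.
have h1 := F1 ku ju hc.
have [m [mk hm]] := Gb eiu ik uk.
exists m; split => //; apply: (mulIf (Snz u)).
rewrite (Ssym k u) in h1; rewrite (Ssym k u) in hm.
exact: algB h1 hm h3.
Qed.

Lemma Gm k i j : i != k -> j != k -> i != j -> connect (av e k) i j ->
  exists m, m != k /\ S i k * S k j * S m m = S i j * S m k ^+ 2.
Proof.
move=> ik jk ij /upath [p [hp up hl]].
rewrite -hl; apply: (G_aux (N := (size p).+1)) => //.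
by apply: contraNneq ij => p0; rewrite -hl p0.
Qed.

Lemma bilSy (u : 'cV[R]_n) k : bil S u (Om *m dv k) = u k 0.
Proof.
by rewrite /bil mulmxA -(mulmxA _ S Om) SOm mulmx1 /dv -colE !mxE.
Qed.

Lemma bil_ge0 (v : 'cV[R]_n) : 0 <= bil S v v.
Proof.
case: (eqVneq v 0) => [->|v0]; last by apply: ltW; apply: pdS.
by rewrite /bil mulmx0 mxE.
Qed.

Lemma reg m k : m != k -> 1 / Om k k <= S k k - S m k ^+ 2 / S m m.
Proof.
move=> mk.
pose t := S m k / S m m.
pose s := 1 / Om k k.
pose x := dv k - t *: dv m.
pose y := Om *m dv k.
have := bil_ge0 (x - s *: y).
rewrite bilBl !bilBr !bilZl !bilZr (bil_sym _ _ SsymT) !bilSy.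
rewrite /y /x bilBl !bilBr !bilZl !bilZr !bil_dv.
rewrite (@bil_sym _ _ S (Om *m dv k) (dv k) SsymT) (@bil_sym _ _ S (Om *m dv k) (dv m) SsymT).
have hyk : (Om *m dv k) k 0 = Om k k by rewrite /dv -colE mxE.
rewrite !bilSy hyk !mxE eqxx (eq_sym k m) (negbTE mk) (Ssym k m) /=.
have hOm : Om k k != 0 by rewrite gt_eqF // Ompos.
have hSm : S m m != 0 by apply: Snz.
move=> h; rewrite -subr_ge0; apply: (le_trans h); rewrite le_eqVlt; apply/orP; left.
by apply/eqP; rewrite /t /s; field; rewrite hOm hSm.
Qed.

Lemma F3 k i j : i != k -> j != k -> i != j -> connect (av e k) i j ->
  1 / Om k k <= S k k - S i k * S k j / S i j.
Proof.
move=> ik jk ij hc; have [m [mk hm]] := Gm ik jk ij hc.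
have -> : S i k * S k j / S i j = S m k ^+ 2 / S m m.
  by apply/eqP; rewrite eqr_div ?Snz ?F2 // hm mulrC.
exact: reg.
Qed.
End Tree.

Section Main.
Variable R : realFieldType.
Variable n : nat.
Variables S T DS DT : 'M[R]_n.
Hypothesis hS : posdef S.
Hypothesis htS : is_tree (ci_graph S).
Hypothesis hDS : nonneg_diag DS.
Hypothesis hT : posdef T.
Hypothesis htT : is_tree (ci_graph T).
Hypothesis hDT : nonneg_diag DT.
Hypothesis hleaf : forall a, is_leaf (ci_graph S) a -> DT a a < 1 / invmx S a a.
Hypothesis heq : S + DS = T + DT.

Local Notation eS := (adj (ci_graph S)).
Local Notation eT := (adj (ci_graph T)).

Lemma offd i j : i != j -> T i j = S i j.
Proof.
move=> ij; have := congr1 (fun M : 'M[R]_n => M i j) heq; rewrite !mxE.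
have /is_diag_mxP dS := hDS.1; have /is_diag_mxP dT := hDT.1.
by rewrite dS // dT // !addr0 => ->.
Qed.

Lemma diagd k : S k k - T k k = DT k k - DS k k.
Proof.
have := congr1 (fun M : 'M[R]_n => M k k) heq; rewrite !mxE => h.
lra.
Qed.

Lemma sep_neq (e : rel 'I_n) k x y : ~~ connect (av e k) x y -> x != y.
Proof. by apply: contraNneq => ->; rewrite connect0. Qed.

Lemma ratio (a b c : R) : a * c = b -> a != 0 -> c = b / a.
Proof. by move=> <- a0; rewrite mulrAC divff ?mul1r. Qed.

Lemma inv_pos (M : 'M[R]_n) (hM : posdef M) k : 0 < 1 / invmx M k k.
Proof. by rewrite divr_gt0 ?ltr01 ?Ompos. Qed.

Lemma caseII k x y : x != k -> y != k ->
  ~~ connect (av eT k) x y -> ~~ connect (av eS k) x y.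
Proof.
move=> xk yk hT'; have xy := sep_neq hT'.
have ky : k != y by rewrite eq_sym.
apply/negP => hS'.
have h1 := F1 hT xk yk hT'.
have h2 := F3 hS htS xk yk xy hS'.
rewrite (offd xy) (offd xk) (offd ky) in h1.
have hTkk := ratio h1 (F2 hS htS xy).
rewrite -hTkk in h2.
have p1 := inv_pos hS k.
have nos : forall u v, u != k -> v != k -> connect (av eS k) u v.
  move=> u v uk vk; apply/negPn/negP => hs; have uv := sep_neq hs.
  have kv : k != v by rewrite eq_sym.
  have g1 := F1 hS uk vk hs.
  have hSkk := ratio g1 (F2 hS htS uv).
  case: (boolP (connect (av eT k) u v)) => hc.
    have g2 := F3 hT htT uk vk uv hc.
    rewrite (offd uv) (offd uk) (offd kv) -hSkk in g2.
    have := inv_pos hT k; lra.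
  have g2 := F1 hT uk vk hc.
  rewrite (offd uv) (offd uk) (offd kv) in g2.
  have := ratio g2 (F2 hS htS uv); rewrite -hSkk; lra.
have [m hm] := nosep_leaf (esymS hS) (eirrS S) htS.2 htS.1 nos (ex_intro _ x xk).
have hl : is_leaf (ci_graph S) k.
  rewrite /is_leaf; have -> : [set j | eS k j] = [set m].
    by apply/setP => j; rewrite !inE hm.
  by rewrite cards1.
have := hleaf hl; have := diagd k; have := hDS.2 k; lra.
Qed.

Lemma caseI k x y : x != k -> y != k ->
  ~~ connect (av eS k) x y -> ~~ connect (av eT k) x y.
Proof.
move=> xk yk hS'; have xy := sep_neq hS'.
have ky : k != y by rewrite eq_sym.
apply/negP => hT'.
have h1 := F1 hS xk yk hS'.
have h2 := F3 hT htT xk yk xy hT'.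
rewrite (offd xy) (offd xk) (offd ky) in h2.
have hSkk := ratio h1 (F2 hS htS xy).
rewrite -hSkk in h2.
have p1 := inv_pos hT k.
have nos : forall u v, u != k -> v != k -> connect (av eT k) u v.
  move=> u v uk vk; apply/negPn/negP => hs; have uv := sep_neq hs.
  have kv : k != v by rewrite eq_sym.
  have hs' := caseII uk vk hs.
  have g1 := F1 hS uk vk hs'.
  have g2 := F1 hT uk vk hs.
  rewrite (offd uv) (offd uk) (offd kv) in g2.
  have := ratio g1 (F2 hS htS uv); have := ratio g2 (F2 hS htS uv); lra.
have [m hm] := nosep_leaf (esymS hT) (eirrS T) htT.2 htT.1 nos (ex_intro _ x xk).
have mk : m != k by apply/eqP => e0; move: (hm m); rewrite eqxx {1}e0 eirrS.
have hk : forall j, eT k j -> j == m by move=> j; rewrite hm.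
have sepm : forall z, z != k -> z != m -> ~~ connect (av eS m) k z.
  move=> z zk zm; apply: caseII; [by rewrite eq_sym | exact: zm | ].
  by apply/negP => c; move: zk; rewrite (leaf_sep hk c) eqxx.
have hkS : forall j, eS k j -> j == m.
  move=> j ekj; apply/negPn/negP => jm.
  have jk : j != k by apply: contraTneq ekj => ->; rewrite eirrS.
  by move: (sepm j jk jm); rewrite (adj_nosep ekj) // eq_sym.
by move: hS'; rewrite (leaf_nosep (esymS hS) htS.1 hkS xk yk).
Qed.

Lemma main_eq : ci_graph T = ci_graph S.
Proof.
apply/setP => -[a b].
have -> : ((a, b) \in ci_graph T) = eT a b by [].
have -> : ((a, b) \in ci_graph S) = eS a b by [].
case: (eqVneq a b) => [<-|ab]; first by rewrite !eirrS.
apply/idP/idP => he; apply: contraT => hn.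
- have [k [ka kb hs]] := nonadj_sep (esymS hS) (eirrS S) htS.2 htS.1 ab hn.
  have ak : a != k by rewrite eq_sym.
  have bk : b != k by rewrite eq_sym.
  have := caseI ak bk hs.
  by rewrite (adj_nosep he ka kb).
- have [k [ka kb hs]] := nonadj_sep (esymS hT) (eirrS T) htT.2 htT.1 ab hn.
  have ak : a != k by rewrite eq_sym.
  have bk : b != k by rewrite eq_sym.
  have := caseII ak bk hs.
  by rewrite (adj_nosep he ka kb).
Qed.
End Main.

Unset Implicit Arguments.

Theorem theorem3 (R : realFieldType) (n : nat)
  (Sstar Dstar S' D' : 'M[R]_n) :
  posdef Sstar ->
  is_tree (ci_graph Sstar) ->
  nonneg_diag Dstar ->
  (forall a, is_leaf (ci_graph Sstar) a ->
     Dstar a a < 1 / invmx Sstar a a) ->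
  posdef S' ->
  is_tree (ci_graph S') ->
  nonneg_diag D' ->
  (forall a, is_leaf (ci_graph Sstar) a ->
     D' a a < 1 / invmx Sstar a a) ->
  Sstar + Dstar = S' + D' ->
  ci_graph S' = ci_graph Sstar.
Proof.
move=> hS htS hDS _ hT htT hDT hleaf heq.
exact: (main_eq hS htS hDS hT htT hDT hleaf heq).
Qed.
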